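(* Let $\mathscr D:\mathscr N=\mathscr N_1\cup\cdots\cup\mathscr N_k$ be a pairwise binary-sized decomposition of a chemical reaction network $\mathscr N$ with set of common complexes $\mathscr C_{\mathscr D}$. If $P: y-x_1-\cdots-x_q$ is a path in $\mathscr N$ such that $y\in\mathscr C_{\mathscr D}$ while $x_1,\dots,x_q\notin\mathscr C_{\mathscr D}$, then there is exactly one subnetwork $\mathscr N_i$ that contains $P$.
   Context: A CRN $\mathscr N=(\mathscr S,\mathscr C,\mathscr R)$ is viewed as a directed graph with vertex set the complexes $\mathscr C$ and arcs the reactions $\mathscr R$. A path is a path in the underlying undirected graph (consecutive complexes joined by a reaction in either direction); a subnetwork contains a path if each of its edges comes from a reaction of that subnetwork. A decomposition $\mathscr N=\mathscr N_1\cup\cdots\cup\mathscr N_k$ is given by a partition $\{\mathscr R_1,\dots,\mathscr R_k\}$ of $\mathscr R$, $k\ge2$; the subnetwork $\mathscr N_i$ has reaction set $\mathscr R_i$ and complex set $\mathscr C_i$ consisting of the complexes occurring in reactions of $\mathscr R_i$. The set $\mathscr C_{\mathscr D}$ of common complexes consists of all complexes lying in the complex sets of at least two distinct subnetworks; $d=|\mathscr C_{\mathscr D}|$. The decomposition is pairwise binary-sized (PBS) if there are integers $0\le b\le c\le d$ such that $|\mathscr C_i\cap\mathscr C_j|\in\{b,c\}$ for all $i\neq j$. *)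

(* Defs.v *)
From mathcomp Require Import all_boot.
Set Implicit Arguments. Unset Strict Implicit. Unset Printing Implicit Defensive.

(* A CRN viewed as a directed graph: complexes [C] (a finite type) and
   reactions [Rx] (a finite type), each reaction having a source (reactant)
   complex [src r] and a target (product) complex [tgt r].  Species play no
   role in this statement. *)

Section CRN.
Variables (C Rx : finType) (src tgt : Rx -> C).

Definition joins (r : Rx) (u v : C) : bool :=
  ((src r == u) && (tgt r == v)) || ((src r == v) && (tgt r == u)).

Definition cplx (B : {set Rx}) : {set C} :=
  [set c | [exists r in B, (src r == c) || (tgt r == c)]].

Definition decomposition (P : {set {set Rx}}) : Prop :=
  partition P [set: Rx] /\ 2 <= #|P|.

Definition common (P : {set {set Rx}}) : {set C} :=
  [set c | [exists B1 in P, exists B2 in P,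
             [&& B1 != B2, c \in cplx B1 & c \in cplx B2]]].

Definition PBS (P : {set {set Rx}}) : Prop :=
  exists b c : nat, [/\ b <= c, c <= #|common P| &
    forall B1 B2, B1 \in P -> B2 \in P -> B1 != B2 ->
      #|cplx B1 :&: cplx B2| = b \/ #|cplx B1 :&: cplx B2| = c].

Definition path_in (B : {set Rx}) (s : seq C) : Prop :=
  forall i, i.+1 < size s ->
    exists r, r \in B /\ joins r (nth (src r) s i) (nth (src r) s i.+1).

Definition is_path (s : seq C) : Prop := uniq s /\ path_in [set: Rx] s.

Definition contains (B : {set Rx}) (s : seq C) : Prop := path_in B s.

End CRN.

(* Main.v *)
Require Import Defs.
From mathcomp Require Import all_boot.

Set Implicit Arguments. Unset Strict Implicit. Unset Printing Implicit Defensive.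

Section Aux.
Variables (C Rx : finType) (src tgt : Rx -> C).

Lemma joins_cplx r (B : {set Rx}) u v : r \in B -> joins src tgt r u v ->
  (u \in cplx src tgt B) && (v \in cplx src tgt B).
Proof.
move=> rB /orP[/andP[/eqP<- /eqP<-]|/andP[/eqP<- /eqP<-]];
  rewrite !inE; apply/andP; split; apply/existsP; exists r;
  by rewrite rB ?eqxx ?orbT.
Qed.

Lemma not_common_eq (P : {set {set Rx}}) x (B1 B2 : {set Rx}) :
  x \notin common src tgt P -> B1 \in P -> B2 \in P ->
  x \in cplx src tgt B1 -> x \in cplx src tgt B2 -> B1 = B2.
Proof.
move=> nc h1 h2 x1 x2; apply/eqP; apply: contraNT nc => ne.
rewrite inE; apply/existsP; exists B1; rewrite h1 /=.
apply/existsP; exists B2; by rewrite h2 ne x1 x2.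
Qed.

End Aux.

Theorem lemma2 (C Rx : finType) (src tgt : Rx -> C)
    (P : {set {set Rx}}) (y : C) (xs : seq C) :
  decomposition P -> PBS src tgt P ->
  0 < size xs ->
  is_path src tgt (y :: xs) ->
  y \in common src tgt P ->
  (forall x, x \in xs -> x \notin common src tgt P) ->
  exists! B : {set Rx}, B \in P /\ contains src tgt B (y :: xs).
Proof.
move=> [/and3P[/eqP covP trivP _] _] _ sz [_ pth] _ ncx.
set s := y :: xs.
have blk : forall r : Rx, exists2 B, B \in P & r \in B.
  move=> r; have : r \in cover P by rewrite covP inE.
  by move=> /bigcupP[B BP rB]; exists B.
have pth' : forall i, i.+1 < size s -> exists r, joins src tgt r (nth y s i) (nth y s i.+1).
  move=> i hi; have [r [_ hr]] := pth i hi.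
  exists r; rewrite (set_nth_default y (src r) (ltnW hi)) in hr.
  by rewrite (set_nth_default y (src r) hi) in hr.
have nthx : forall i, 0 < i -> i < size s -> nth y s i \notin common src tgt P.
  case=> // i _ hi; apply: ncx => /=; exact: mem_nth.
have [r0 j0] := pth' 0 sz.
have [B0 B0P r0B] := blk r0.
have H : forall i r, 0 < i -> i.+1 < size s -> nth y s i \in cplx src tgt B0 ->
    joins src tgt r (nth y s i) (nth y s i.+1) -> r \in B0.
  move=> i r i0 hi c0 jr.
  have [B BP rB] := blk r.
  have /andP[c1 _] := joins_cplx rB jr.
  have -> : B0 = B by apply: (not_common_eq (nthx i i0 (ltnW hi))).
  exact: rB.
have claim : forall i, i < size s -> nth y s i \in cplx src tgt B0.
  elim=> [_|i IH hi].
    by have /andP[] := joins_cplx r0B j0.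
  have [->|ipos] := posnP i.
    by have /andP[] := joins_cplx r0B j0.
  have [r jr] := pth' i hi.
  have rB := H i r (ipos) hi (IH (ltnW hi)) jr.
  by have /andP[] := joins_cplx rB jr.
have cont : contains src tgt B0 s.
  move=> i hi.
  have [->|ipos] := posnP i.
    exists r0; split => //.
    by move: j0; rewrite /= (set_nth_default y (src r0) sz).
  have [r jr] := pth' i hi.
  exists r; split; first exact: (H i r ipos hi (claim i (ltnW hi)) jr).
  by rewrite (set_nth_default y (src r) (ltnW hi)) (set_nth_default y (src r) hi).
exists B0; split; first by split.
move=> B' [B'P cB'].
have [r [rB' jr]] := cB' 0 sz.
move: jr; rewrite /= (set_nth_default y (src r) sz) => jr.
have /andP[_ c1] := joins_cplx rB' jr.
exact: (not_common_eq (nthx 1 isT sz) B0P B'P (claim 1 sz) c1).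
Qed.
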